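(* In the setting of the context, for every $j\in[N]$, $s\in\Gamma$, $k\in[n]$ and $\dagger\in\{+,-\}$, $$\nu^{s\bar P}\big(\pi_{s\bar P}\varphi(Z^\dagger_{j,s,k})\big)\le\frac1{M_k}\int u^\dagger_k\,d\nu^{sP}.$$
   Context: Standing setting: $\Gamma$ countably infinite, $n\in\mathbb N$, $\mathbb Z\Gamma$ the integral group ring (product $(fg)_t=\sum_sf_{ts^{-1}}g_s$, involution $(f^* )_s=f_{s^{-1}}$, $(f^* )^{(km)}=(f^{(mk)})^*$). $f=M-g\in M_n(\mathbb Z\Gamma)$, $M=\mathrm{diag}(M_1,\dots,M_n)$ positive integers, $M_k>\sum_m\|g^{(km)}\|_1$, and a subsemigroup $P\subseteq\Gamma\setminus\{e_\Gamma\}$ containing all $\mathrm{supp}(g^{(km)})$; $\bar P=P\cup\{e_\Gamma\}$, $\bar M=\max_kM_k$, $S_f=\prod_k\{0,\dots,M_k-1\}$, $Y=S_f^\Gamma$ (row vectors, entries $y_{s,k}$, $(yF)_m=\sum_ky_kF^{(km)}$ by convolution). $\nu$ is a probability measure on $S_f$ whose marginal on each factor $\{0,\dots,M_k-1\}$ is uniform; for $E\subseteq\Gamma$, $\nu^E$ is the product measure on $S_f^E$ and $\pi_E:S_f^\Gamma\to S_f^E$ the restriction. $N\ge\bar M\|(f^* )^{-1}\|_{1,\infty}$ fixed integer, $V=(\{-N,\dots,N\}^\Gamma)^n\setminus\{0\}$, $Z=\{(y,c)\in Y\times V: y+cf^*\in Y\}$, $\varphi:Y\times V\to Y$ the projection,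 $Z^+_{j,s,k}=\{(y,c)\in Z:\max_{t,m}|c_{t,m}|=c_{s,k}=j\}$, $Z^-_{j,s,k}=\{(y,c)\in Z:\max_{t,m}|c_{t,m}|=-c_{s,k}=j\}$. $A_k=\{(a,m):g^{(km)}_a\neq0\}$; for $B_k\subseteq A_k$ and $\dagger\in\{+,-\}$, $Z^\dagger_{j,s,k,B_k}$ is the set of $(y,c)\in Z^\dagger_{j,s,k}$ with $c_{sa,m}=\dagger\mathrm{sgn}(g^{(km)}_a)j$ for $(a,m)\in B_k$ and $c_{sa,m}\neq\dagger\mathrm{sgn}(g^{(km)}_a)j$ for $(a,m)\in A_k\setminus B_k$, and $Z^\dagger_{j,s,k,B_k,i}=\{(y,c)\in Z^\dagger_{j,s,k,B_k}:y_{s,k}=i\}$. Finally $u^\dagger_k:S_f^{sP}\to\mathbb R$ is $u^\dagger_k=\sum_{i=0}^{M_k-1}\chi_{\pi_{sP}\varphi(\bigcup_{B_k\subseteq A_k}Z^\dagger_{j,s,k,B_k,i})}$ ($\chi$ denotes characteristic function). *)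

(* Defs.v *)
From HB Require Export structures.
From mathcomp Require Export all_boot all_order all_algebra.
From mathcomp Require Export all_classical all_reals all_analysis.
Unset Implicit Arguments.
Import Order.TTheory GRing.Theory Num.Theory.
Local Open Scope classical_set_scope.
Local Open Scope ring_scope.

Definition group_axioms (G : Type) (mul : G -> G -> G) (inv : G -> G) (e : G) :=
  [/\ forall a b c, mul a (mul b c) = mul (mul a b) c,
      forall a, mul e a = a, forall a, mul a e = a,
      forall a, mul (inv a) a = e & forall a, mul a (inv a) = e].

Section Setting.
Variables (G : countType) (mul : G -> G -> G) (inv : G -> G) (e : G).
Variables (n : nat) (M : 'I_n -> nat).

(* ---------- integral group ring elements: finitely supported G -> int ---------- *)
Definition supp (h : G -> int) : set G := [set a | h a != 0].
Definition finsupp (h : G -> int) := finite_set (supp h).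
Definition norm1Z (h : G -> int) : int := (\sum_(a \in supp h) `|h a|)%R.
Definition star (h : G -> int) : G -> int := fun s => h (inv s).

Definition fmat (g : 'I_n -> 'I_n -> G -> int) (k m : 'I_n) : G -> int :=
  fun a => (if (k == m) && (a == e) then (M k)%:Z else 0) - g k m a.
Definition fstar (g : 'I_n -> 'I_n -> G -> int) (k m : 'I_n) : G -> int :=
  star (fmat g m k).

Definition convZ (x h : G -> int) : G -> int :=
  fun t => (\sum_(s \in supp h) x (mul t (inv s)) * h s)%R.
Definition rowmulZ (c : G -> 'I_n -> int) (F : 'I_n -> 'I_n -> G -> int)
  : G -> 'I_n -> int :=
  fun t m => (\sum_(k < n) convZ (fun s => c s k) (F k m) t)%R.

Variable R : realType.
Definition ell1 (h : G -> R) := (\esum_(t in [set: G]) (`|h t|)%:E < +oo)%E.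
Definition norm1R (h : G -> R) : \bar R := (\esum_(t in [set: G]) (`|h t|)%:E)%E.
Definition convZR (a : G -> int) (h : G -> R) : G -> R :=
  fun t => (\sum_(u \in supp a) (a u)%:~R * h (mul (inv u) t))%R.
Definition convRZ (h : G -> R) (a : G -> int) : G -> R :=
  fun t => (\sum_(s \in supp a) h (mul t (inv s)) * (a s)%:~R)%R.
Definition deltaR (k m : 'I_n) : G -> R := fun t => ((k == m) && (t == e))%:R.
Definition is_inverse_of_fstar (g : 'I_n -> 'I_n -> G -> int)
  (h : 'I_n -> 'I_n -> G -> R) :=
  [/\ forall k m, ell1 (h k m),
      forall k m, (fun t => \sum_(l < n) convZR (fstar g k l) (h l m) t) = deltaR k m
    & forall k m, (fun t => \sum_(l < n) convRZ (h k l) (fstar g l m) t) = deltaR k m].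
(* ||H||_{1,oo} = max_m sum_k ||H^{(km)}||_1 : operator norm of x |-> x H on (l^oo)^n *)
Definition norm1oo (h : 'I_n -> 'I_n -> G -> R) : \bar R :=
  (\big[maxe/0%E]_(m < n) \sum_(k < n) norm1R (h k m))%E.

(* S_f = prod_k {0,...,M_k - 1}; written with 'I_((M k).-1.+1), which is 'I_(M k)
   under the standing hypothesis 0 < M k (this makes S_f canonically pointed). *)
Definition Sf := {dffun forall k : 'I_n, 'I_((M k).-1.+1)}.
HB.instance Definition _ := Finite.on Sf.
HB.instance Definition _ := isPointed.Build Sf (finfun (fun k => ord0)).
Definition conf := G -> Sf.
Definition coord (E : set G) := {t : G | E t}.
Definition confE (E : set G) := coord E -> Sf.
Definition restr (E : set G) (y : conf) : confE E := fun t => y (sval t).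

Definition cyl (E : set G) (ts : seq G) (w : G -> Sf) : set (confE E) :=
  [set x | forall t : coord E, sval t \in ts -> x t = w (sval t)].
Definition cylinders (E : set G) : set (set (confE E)) :=
  [set A | exists ts w, A = cyl E ts w].

(* mu is the product measure nu^E: it agrees with prod nu on cylinders
   (this determines it uniquely on the product sigma-algebra) *)
Definition is_product_measure (nu : Sf -> R) (E : set G)
  (mu : probability (g_sigma_algebraType (cylinders E)) R) :=
  forall ts w, mu (cyl E ts w) = (\prod_(t <- undup ts | `[< E t >]) nu (w t))%:E.

Definition inY (z : G -> 'I_n -> int) := forall t m, 0 <= z t m < (M m)%:Z.
Definition inV (N : nat) (c : G -> 'I_n -> int) :=
  (forall t m, `|c t m| <= N%:Z) /\ exists t m, c t m != 0.
Definition yZ (y : conf) : G -> 'I_n -> int := fun t m => (nat_of_ord (y t m))%:Z.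
Definition Zset (g : 'I_n -> 'I_n -> G -> int) (N : nat)
  : set (conf * (G -> 'I_n -> int)) :=
  [set yc | inV N yc.2 /\ inY (fun t m => yZ yc.1 t m + rowmulZ yc.2 (fstar g) t m)].
Definition is_maxabs (c : G -> 'I_n -> int) (j : int) :=
  (forall t m, `|c t m| <= j) /\ exists t m, `|c t m| = j.
Definition sgnb (d : bool) : int := if d then 1 else -1.
(* Z^dagger_{j,s,k}, with dagger = + iff d = true *)
Definition Zd g N (d : bool) (j : nat) (s : G) (k : 'I_n) :=
  [set yc | Zset g N yc /\ is_maxabs yc.2 j%:Z /\ yc.2 s k = sgnb d * j%:Z].
Definition Aset (g : 'I_n -> 'I_n -> G -> int) (k : 'I_n) : set (G * 'I_n) :=
  [set am | g k am.2 am.1 != 0].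
Definition ZdB g N d j s k (B : set (G * 'I_n)) :=
  [set yc | Zd g N d j s k yc /\
     (forall am, B am -> yc.2 (mul s am.1) am.2 = sgnb d * sgz (g k am.2 am.1) * j%:Z) /\
     (forall am, Aset g k am -> ~ B am ->
        yc.2 (mul s am.1) am.2 != sgnb d * sgz (g k am.2 am.1) * j%:Z)].
Definition ZdBi g N d j s k B (i : nat) :=
  [set yc | ZdB g N d j s k B yc /\ nat_of_ord (yc.1 s k) = i].
Definition phi (yc : conf * (G -> 'I_n -> int)) : conf := yc.1.

Definition lset (s : G) (P : set G) : set G := [set mul s p | p in P].
Definition Pbar (P : set G) : set G := P `|` [set e].

Definition u_fun g N d j s k (P : set G) : confE (lset s P) -> R :=
  fun x => (\sum_(i < M k)
    \1_(restr (lset s P) @` (phi @`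
        \bigcup_(B in [set B | B `<=` Aset g k]) ZdBi g N d j s k B i)) x)%R.

End Setting.

(* Main.v *)
Require Import Defs.
Import Order.TTheory GRing.Theory Num.Theory.
Local Open Scope classical_set_scope.

Section Koenig.
Variables (G : countType) (W : finType) (w0 : W) (V : Type) (p : W -> V) (E : set G)
  (K : set (G -> W)) (x : G -> V).
Hypothesis Kc : forall z, (forall n, exists2 z', K z' & forall t, (pickle t < n)%N -> z' t = z t) -> K z.

Let C n z := K z /\ (forall t, E t -> (pickle t < n)%N -> p (z t) = x t).
Hypothesis Hn : forall n, exists z, C n z.

Let agreeP (pre : seq W) (z : G -> W) :=
  forall t, (pickle t < size pre)%N -> z t = nth w0 pre (pickle t).
Let good pre := forall n, exists z, C n z /\ agreeP pre z.

Let good_step pre : good pre -> exists w, good (rcons pre w).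
Proof.
move=> gp; apply: boolp.contrapT => nH.
have H : forall w, ~ good (rcons pre w) by move=> w gw; apply: nH; exists w.
have /choice [nw Hnw] : forall w, exists n, ~ (exists z, C n z /\ agreeP (rcons pre w) z).
  by move=> w; apply/existsNP; apply: H.
have [z [[Kz Az] Pz]] := gp (\max_(w : W) nw w).
pose w := match pickle_inv (size pre) with Some t => z t | None => w0 end.
case: (Hnw w); exists z; split; first split => //.
  move=> t Et lt; apply: Az => //; apply: leq_trans lt _; exact: leq_bigmax.
move=> t; rewrite size_rcons ltnS leq_eqVlt => /orP[/eqP ht|ht].
  rewrite nth_rcons ht ltnn eqxx /w -ht pickleK_inv //.
by rewrite nth_rcons ht; apply: Pz.
Qed.

Let nextw pre := match pselect (exists w, good (rcons pre w)) with
  | left H => proj1_sig (cid H) | right _ => w0 end.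

Fixpoint pre m := match m with 0 => [::] | m'.+1 => rcons (pre m') (nextw (pre m')) end.

Let size_pre m : size (pre m) = m.
Proof. by elim: m => //= m IH; rewrite size_rcons IH. Qed.

Let good_pre m : good (pre m).
Proof.
elim: m => [|m IH] /=.
  by move=> n; have [z Cz] := Hn n; exists z; split => // t; rewrite ltn0.
rewrite /nextw; case: pselect => [H|H]; first exact: (proj2_sig (cid H)).
by exfalso; apply: H; apply: good_step.
Qed.

Let nth_pre i m m' : (i < m)%N -> (m <= m')%N -> nth w0 (pre m') i = nth w0 (pre m) i.
Proof.
move=> im; elim: m' => [|m' IH]; first by rewrite leqn0 => /eqP ->.
rewrite leq_eqVlt => /orP[/eqP -> //|]; rewrite ltnS => hm.
by rewrite -(IH hm) /= nth_rcons size_pre (leq_trans im hm).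
Qed.

Let zs (t : G) := nth w0 (pre (pickle t).+1) (pickle t).

Let zs_agree m t : (pickle t < m)%N -> zs t = nth w0 (pre m) (pickle t).
Proof.
move=> lt; rewrite /zs; case: (leqP (pickle t).+1 m) => h.
  by rewrite (@nth_pre _ _ _ (ltnSn _) h).
by rewrite (@nth_pre _ _ _ lt (ltnW h)).
Qed.

Lemma koenig : exists2 z, K z & forall t, E t -> p (z t) = x t.
Proof.
exists zs.
  apply: Kc => n; have [z [[Kz _] Pz]] := good_pre n n; exists z => // t lt.
  by rewrite Pz ?size_pre // (@zs_agree _ _ lt).
move=> t Et; have [z [[Kz Az] Pz]] := good_pre (pickle t).+1 (pickle t).+1.
rewrite (@zs_agree _ _ (ltnSn _)) -Pz ?size_pre //; exact: Az.
Qed.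
End Koenig.


Section ImgMeas.
Variables (G : countType) (n : nat) (M : 'I_n -> nat).
Notation Sf := (Sf n M).

Definition tsm (m : nat) : seq G := pmap (@pickle_inv G) (iota 0 m).

Lemma mem_tsm m t : (t \in tsm m) = (pickle t < m)%N.
Proof.
rewrite /tsm mem_pmap; apply/mapP/idP => [[i]|lt].
  rewrite mem_iota add0n => /andP[_ lt] ht.
  by have := @pickle_invK G i; rewrite -ht /= => ->.
by exists (pickle t); rewrite ?(@pickleK_inv G) // mem_iota add0n.
Qed.

Definition wvm m (l : seq Sf) (t : G) : Sf := nth point l (index t (tsm m)).

Lemma image_measurable (E : set G) (W : finType) (w0 : W) (p : W -> Sf)
  (K : set (G -> W))
  (Kc : forall z, (forall m, exists2 z', K z' & forall t, (pickle t < m)%N -> z' t = z t) -> K z) :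
  @measurable _ (g_sigma_algebraType (cylinders G n M E))
    [set restr G n M E (p \o z) | z in K].
Proof.
set S := [set _ | _ in _].
pose Sm m := [set x : confE G n M E | exists2 z, K z &
   forall t : coord G E, (pickle (sval t) < m)%N -> x t = p (z (sval t))].
pose Fm m i : set (confE G n M E) := match unpickle i with
  Some l => cyl G n M E (tsm m) (wvm m l) | None => set0 end.
pose Pm m i := exists2 z, K z & i = pickle [seq p (z t) | t <- tsm m].
have SmE m : Sm m = \bigcup_(i in Pm m) Fm m i.
  apply/seteqP; split => [x [z Kz hx]|x [i [z Kz ->]]].
    exists (pickle [seq p (z t) | t <- tsm m]); first by exists z.
    rewrite /Fm pickleK => t; rewrite mem_tsm => lt.
    by rewrite hx // /wvm /= (nth_map (sval t)) ?index_mem ?mem_tsm // nth_index // mem_tsm.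
  rewrite /Fm pickleK => hx; exists z => // t lt.
  by rewrite hx ?mem_tsm // /wvm /= (nth_map (sval t)) ?index_mem ?mem_tsm // nth_index // mem_tsm.
have -> : S = \bigcap_(m in [set: nat]) Sm m.
  apply/seteqP; split => [x [z Kz <-] m _|x hx].
    by exists z.
  pose x' (t : G) : Sf := match pselect (E t) with left h => x (exist _ t h) | right _ => point end.
  have Hn : forall m, exists z, K z /\ (forall t, E t -> (pickle t < m)%N -> p (z t) = x' t).
    move=> m; have [z Kz hz] := hx m Logic.I; exists z; split => // t Et lt.
    by rewrite /x'; case: pselect => // h; rewrite hz.
  have [z Kz hz] := @koenig G W w0 Sf p E K x' Kc Hn.
  exists z => //; apply: boolp.funext => -[t Et] /=; rewrite /restr /= hz // /x'.
  by case: pselect => // h; congr x; exact: eq_exist.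
apply: bigcap_measurable; first by exists 0%N.
move=> m _; rewrite SmE; apply: bigcup_measurable => i _.
rewrite /Fm; case: unpickle => [l|]; last exact: measurable0.
by apply: sub_sigma_algebra; exists (tsm m), (wvm m l).
Qed.
End ImgMeas.

From mathcomp Require Import zify.
From mathcomp Require Import measurable_realfun.
Import Order.TTheory GRing.Theory Num.Theory.
Local Open Scope classical_set_scope.
Local Open Scope ring_scope.

Lemma finite_pickle_bound (G : countType) (A : set G) :
  finite_set A -> exists m, forall a, A a -> (pickle a < m)%N.
Proof.
move=> /finite_fsetP [X ->]; exists (\max_(a <- finmap.enum_fset X) (pickle a).+1)%N => a aX.
exact: (@leq_bigmax_seq G (finmap.enum_fset X) xpredT (fun a : G => (pickle a).+1) a aX isT).
Qed.

Lemma group_invK (G : Type) mul inv (e : G) : group_axioms G mul inv e ->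
  forall a, inv (inv a) = a.
Proof.
case=> mA m1 m2 mV Vm a.
by rewrite -[LHS]m2 -(mV a) mA mV m1.
Qed.

Section ZdClosed.
Variables (G : countType) (mul : G -> G -> G) (inv : G -> G) (e : G)
  (HG : group_axioms G mul inv e)
  (n : nat) (M : 'I_n -> nat) (g : 'I_n -> 'I_n -> G -> int)
  (Hgfin : forall k m, finsupp G (g k m))
  (N : nat) (d : bool) (j : nat) (Hj : (1 <= j)%N) (s : G) (k : 'I_n).

Definition Wt := (Sf n M * {ffun 'I_n -> 'I_(2*N).+1})%type.
Definition unclamp (o : 'I_(2*N).+1) : int := (o%:Z - N%:Z)%R.
Definition clamp (v : int) : 'I_(2*N).+1 := inord (absz (v + N%:Z)).
Definition dec (z : G -> Wt) : conf G n M * (G -> 'I_n -> int) :=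
  (fun t => (z t).1, fun t m => unclamp ((z t).2 m)).
Definition enc (yc : conf G n M * (G -> 'I_n -> int)) : G -> Wt :=
  fun t => (yc.1 t, [ffun m => clamp (yc.2 t m)]).

Lemma unclamp_bound o : `|unclamp o| <= N%:Z.
Proof. rewrite /unclamp; have := ltn_ord o; lia. Qed.

Lemma dec_enc yc : (forall t m, `|yc.2 t m| <= N%:Z) -> dec (enc yc) = yc.
Proof.
case: yc => y c /= hc; rewrite /dec /enc /=; congr pair.
apply: boolp.funext => t; apply: boolp.funext => m; rewrite ffunE /unclamp /clamp.
have h := hc t m; rewrite inordK; first lia.
rewrite ltnS; lia.
Qed.

Lemma supp_fstar_fin k' m : finite_set (supp G (fstar G inv e n M g k' m)).
Proof.
apply: (@sub_finite_set _ _ (inv @` ([set e] `|` supp G (g m k')))).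
  move=> a; rewrite /supp /fstar /star /= => ha; exists (inv a); last exact: (@group_invK _ _ _ _ HG).
  rewrite /fmat in ha; case: (eqVneq (inv a) e) => [->|hne]; [by left|right].
  by move: ha; rewrite /= (negbTE hne) andbF sub0r oppr_eq0.
by apply: finite_image; rewrite finite_setU; split; [exact: finite_set1|exact: Hgfin].
Qed.

Definition Kset (P0 : Sf n M -> Prop) : set (G -> Wt) :=
  [set z | Zd G mul inv e n M g N d j s k (dec z) /\ P0 ((dec z).1 s)].

Lemma Kset_closed P0 z :
  (forall m, exists2 z', Kset P0 z' & forall t, (pickle t < m)%N -> z' t = z t) ->
  Kset P0 z.
Proof.
move=> hz.
have agreeA A : finite_set A -> exists2 z', Kset P0 z' & forall a, A a -> z' a = z a.
  move=> /finite_pickle_bound [m hm]; have [z' K' h'] := hz m.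
  by exists z' => // a /hm; exact: h'.
have at1 t : exists2 z', Kset P0 z' & z' t = z t.
  by have [z' K' h'] := agreeA _ (finite_set1 t); exists z' => //; apply: h'.
have [zs [[[_ _] [_ hs]] P0s] zss] := at1 s.
have hcs : (dec z).2 s k = sgnb d * j%:Z by rewrite /dec /= -zss; exact: hs.
split; last by rewrite /dec /= -zss; exact: P0s.
split; last split => //.
  split.
    split; first by move=> t m; exact: unclamp_bound.
    exists s, k; rewrite hcs; case: d => /=; rewrite ?mul1r ?mulN1r ?oppr_eq0 /=; lia.
  move=> t m.
  pose A := [set t] `|` \bigcup_(k' in [set: 'I_n]) [set mul t (inv a) | a in supp G (fstar G inv e n M g k' m)].
  have finA : finite_set A.
    rewrite finite_setU; split; first exact: finite_set1.
    apply: bigcup_finite; first exact: finite_finset.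
    by move=> k' _; apply: finite_image; exact: supp_fstar_fin.
  have [z' [[[_ hY] _] _] hz'] := agreeA _ finA.
  have Eq : yZ G n M (dec z').1 t m + rowmulZ G mul inv n (dec z').2 (fstar G inv e n M g) t m
    = yZ G n M (dec z).1 t m + rowmulZ G mul inv n (dec z).2 (fstar G inv e n M g) t m.
    congr (_ + _).
      by rewrite /yZ /dec /= hz' //; left.
    rewrite /rowmulZ; apply: eq_bigr => k' _; rewrite /convZ; apply: eq_fsbigr => a.
    rewrite inE => ha; rewrite /dec /= hz' //; right; exists k' => //; exists a => //.
  by have := hY t m; rewrite /= Eq.
split.
  move=> t m; have [z' [[_ [[hm _] _]] _] ht] := at1 t.
  by have := hm t m; rewrite /dec /= ht.
exists s, k; rewrite hcs; case: d => /=; rewrite ?mul1r ?mulN1r ?normrN; lia.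
Qed.
Lemma Zd_img_meas (E : set G) (P0 : Sf n M -> Prop) :
  @measurable _ (g_sigma_algebraType (cylinders G n M E))
    (restr G n M E @` (phi G n M @`
       [set yc | Zd G mul inv e n M g N d j s k yc /\ P0 (yc.1 s)])).
Proof.
have -> : restr G n M E @` (phi G n M @`
       [set yc | Zd G mul inv e n M g N d j s k yc /\ P0 (yc.1 s)])
   = [set restr G n M E (fst \o z) | z in Kset P0].
  apply/seteqP; split => [x [y [yc [hZ hP] <-] <-]|x [z Kz <-]].
    have hb : forall t m, `|yc.2 t m| <= N%:Z by case: hZ => [[[hb _] _] _].
    exists (enc yc); first by rewrite /Kset /= dec_enc.
    by [].
  by exists (dec z).1 => //; exists (dec z).
apply: (@image_measurable G n M E Wt (point, [ffun=> ord0]) fst (Kset P0)).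
exact: Kset_closed.
Qed.
End ZdClosed.


Notation CT G n M E := (g_sigma_algebraType (cylinders G n M E)).

Section Incl.
Variables (G : countType) (n : nat) (M : 'I_n -> nat) (E E' : set G)
  (hEE' : forall t, E t -> E' t).

Definition incl (t : coord G E) : coord G E' := exist _ (sval t) (@hEE' (sval t) (proj2_sig t)).
Definition rs (x : confE G n M E') : confE G n M E := fun t => x (incl t).

Lemma rs_cyl ts w :
  rs @^-1` (cyl G n M E ts w) = cyl G n M E' [seq t <- ts | `[< E t >]] w.
Proof.
apply/seteqP; split => x hx [t Et'] /=.
  rewrite mem_filter => /andP[/asboolP Et tts].
  have -> : exist _ t Et' = incl (exist _ t Et) by apply: eq_exist.
  exact: hx.
move=> tts; apply: hx; rewrite /= mem_filter tts andbT; exact/asboolP.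
Qed.

Lemma rs_meas : @measurable_fun _ _ (CT G n M E') (CT G n M E) setT rs.
Proof.
apply: (@measurability _ _ (CT G n M E') (CT G n M E) setT rs (cylinders G n M E)) => //.
move=> _ [B [ts [w ->]] <-]; rewrite setTI rs_cyl.
by apply: sub_sigma_algebra; exists [seq t <- ts | `[< E t >]], w.
Qed.
End Incl.
Arguments incl {G E E'}.
Arguments rs {G n M E E'}.
Arguments rs_cyl {G n M E E'}.
Arguments rs_meas {G n M E E'}.

Section M1.
Variables (G : countType) (n : nat) (M : 'I_n -> nat) (E E' : set G)
  (hEE' : forall t, E t -> E' t) (s : G) (a : Sf n M) (R : realType)
  (mu : {measure set (CT G n M E') -> \bar R}).

Definition Xa : set (CT G n M E') := cyl G n M E' [:: s] (fun _ => a).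

Lemma Xa_meas : measurable Xa.
Proof. by apply: sub_sigma_algebra; exists [:: s], (fun _ => a). Qed.

Lemma rs_pre_meas (A : set (CT G n M E)) : measurable A ->
  measurable (Xa `&` (rs hEE' @^-1` A) : set (CT G n M E')).
Proof.
move=> mA; apply: measurableI; first exact: Xa_meas.
by rewrite -[X in measurable X]setTI; apply: (rs_meas hEE').
Qed.

Definition m1 (A : set (CT G n M E)) : \bar R := mu (Xa `&` (rs hEE' @^-1` A)).

Let m1_0 : m1 set0 = 0%E.
Proof. by rewrite /m1 preimage_set0 setI0 measure0. Qed.

Let m1_ge0 A : (0 <= m1 A)%E.
Proof. exact: measure_ge0. Qed.

Let m1_sigma : semi_sigma_additive m1.
Proof.
move=> F mF tF mUF; rewrite /m1 preimage_bigcup setI_bigcupr.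
apply: measure_semi_sigma_additive.
- by move=> i; exact: rs_pre_meas.
- apply/trivIsetP => /= i j _ _ ij; rewrite setIACA setIid -preimage_setI.
  by move/trivIsetP : tF => /(_ _ _ _ _ ij) ->//; rewrite preimage_set0 setI0.
- by rewrite -setI_bigcupr -preimage_bigcup; exact: rs_pre_meas.
Qed.

HB.instance Definition _ := isMeasure.Build _ _ _ m1 m1_0 m1_ge0 m1_sigma.
End M1.
Arguments Xa {G n M E'}.
Arguments m1 {G n M E E'} hEE' s a {R}.
Arguments rs_pre_meas {G n M E E'} hEE' s a.

Lemma cyl_setI (G : countType) (n : nat) (M : 'I_n -> nat) (E : set G) ts w ts' w' :
  cyl G n M E ts w `&` cyl G n M E ts' w' = set0 \/
  cyl G n M E ts w `&` cyl G n M E ts' w' =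
    cyl G n M E (ts ++ ts') (fun t => if t \in ts then w t else w' t).
Proof.
case: (pselect (forall t : coord G E, sval t \in ts -> sval t \in ts' ->
   w (sval t) = w' (sval t))) => [hc|hc]; [right|left].
  apply/seteqP; split => x.
    move=> [h1 h2] t; rewrite mem_cat; case: ifP => [/h1 //|_ /= ht]; exact: h2.
  move=> h; split => t ht.
    by rewrite h ?mem_cat ?ht // ht.
  rewrite h ?mem_cat ?ht ?orbT //; case: ifP => // h1; exact: hc.
apply/seteqP; split => // x [h1 h2]; apply: hc => t t1 t2.
by rewrite -h1 // -h2.
Qed.

Section Product.
Variables (G : countType) (mul : G -> G -> G) (inv : G -> G) (e : G)
  (HG : group_axioms G mul inv e) (n : nat) (M : 'I_n -> nat)
  (P : set G) (HPe : ~ P e) (s : G) (R : realType) (nu : Sf n M -> R)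
  (Hnu0 : forall x, 0 <= nu x).

Notation E := (lset G mul s P).
Notation E' := (lset G mul s (Pbar G e P)).

Variables (muPb : probability (CT G n M E') R)
  (HmuPb : is_product_measure G n M R nu E' muPb)
  (muP : probability (CT G n M E) R)
  (HmuP : is_product_measure G n M R nu E muP).

Lemma hEE' : forall t, E t -> E' t.
Proof. by move=> t [p Pp <-]; exists p => //; left. Qed.

Lemma sE' : E' s.
Proof. by case: HG => _ _ m2 _ _; exists e; [right|exact: m2]. Qed.

Lemma s_notE : ~ E s.
Proof.
case: HG => mA m1 m2 mV Vm [p Pp hp]; apply: HPe.
have : mul (inv s) (mul s p) = mul (inv s) s by rewrite hp.
by rewrite mA mV m1 => <-.
Qed.

Variable a : Sf n M.

Definition Gs : set (set (CT G n M E)) := [set B | cylinders G n M E B \/ B = set0].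

Lemma prod_meas (A : set (CT G n M E)) : measurable A ->
  m1 hEE' s a muPb A = ((nu a)%:E * muP A)%E.
Proof.
move=> mA.
pose m2 := mscale (NngNum (Hnu0 a)) muP.
have -> : ((nu a)%:E * muP A)%E = m2 A by [].
have mG : @measurable _ (CT G n M E) = <<s Gs >>.
  rewrite eqEsubset; split.
    apply: smallest_sub; first exact: smallest_sigma_algebra.
    by move=> B cB; apply: sub_sigma_algebra; left.
  apply: smallest_sub; first exact: smallest_sigma_algebra.
  move=> B [cB|->]; last exact: measurable0.
  exact: sub_sigma_algebra.
pose w0 : G -> Sf n M := fun _ => point.
apply: (measure_unique Gs (fun _ => setT)) => //.
- move=> B C [[ts [w ->]]|->] [[ts' [w' ->]]|->]; rewrite ?set0I ?setI0; try by right.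
  case: (@cyl_setI G n M E ts w ts' w') => ->; [by right|left].
  by exists (ts ++ ts'), (fun t => if t \in ts then w t else w' t).
- by move=> _; left; exists [::], w0; apply/seteqP; split.
- by rewrite bigcup_const.
- move=> B [[ts [w ->]]|->]; last by rewrite !measure0.
  rewrite /m1 /= rs_cyl /Xa /m2 /mscale /= HmuP.
  set tsE := [seq t <- ts | `[< E t >]].
  pose wa t := if t == s then a else w t.
  have snE : s \notin tsE by rewrite mem_filter; apply/negP => /andP[/asboolP /s_notE].
  have -> : cyl G n M E' [:: s] (fun _ => a) `&` cyl G n M E' tsE w =
            cyl G n M E' (s :: tsE) wa.
    apply/seteqP; split => x.
      move=> [h1 h2] t; rewrite in_cons /wa; case: eqP => [hs _|hs /= ht].
        by apply: h1; rewrite hs mem_seq1.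
      exact: h2.
    move=> h; split => t ht.
      by rewrite h ?in_cons; move: ht; rewrite mem_seq1 => /eqP ->; rewrite /wa eqxx.
    rewrite h ?in_cons ?ht ?orbT // /wa; case: eqP => // hs.
    by move: ht; rewrite hs (negbTE snE).
  rewrite HmuPb /= (negbTE snE) big_cons.
  have -> : `[< E' s >] = true by apply/asboolP; exact: sE'.
  rewrite /wa eqxx EFinM; congr (_ * _)%E; congr (_%:E).
  rewrite /tsE -filter_undup big_filter_cond; apply: eq_big => t.
    by case: (boolp.asboolP (E t)) => Et //=; apply/asboolP; exact: hEE'.
  move=> /andP[/asboolP Et _]; case: eqP => // ht.
  by exfalso; apply: s_notE; move: Et; rewrite ht.
- move=> _; rewrite /m1; apply: (le_lt_trans (probability_le1 _ _)); last exact: ltry.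
  exact: rs_pre_meas.
Qed.
End Product.


Theorem lemma4p5
  (G : countType) (mul : G -> G -> G) (inv : G -> G) (e : G)
  (HG : group_axioms G mul inv e) (Hinf : infinite_set [set: G])
  (n : nat) (M : 'I_n -> nat) (HMpos : forall k, (0 < M k)%N)
  (g : 'I_n -> 'I_n -> G -> int) (Hgfin : forall k m, finsupp G (g k m))
  (Hdom : forall k, \sum_(m < n) norm1Z G (g k m) < (M k)%:Z)
  (P : set G) (HPmul : forall a b, P a -> P b -> P (mul a b)) (HPe : ~ P e)
  (HPsupp : forall k m, supp G (g k m) `<=` P)
  (R : realType) (nu : Sf n M -> R) (Hnu0 : forall x, 0 <= nu x)
  (Hnu1 : \sum_(x : Sf n M) nu x = 1)
  (Hmarg : forall (k : 'I_n) (i : 'I_((M k).-1.+1)),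
      \sum_(x : Sf n M | x k == i) nu x = (M k)%:R^-1)
  (N : nat)
  (HN : exists h, is_inverse_of_fstar G mul inv e n M R g h /\
        (((\max_(k < n) M k)%:R)%:E * norm1oo G n R h <= (N%:R)%:E)%E)
  (j : nat) (Hj : (1 <= j <= N)%N) (s : G) (k : 'I_n) (d : bool)
  (muPb : probability (g_sigma_algebraType
                         (cylinders G n M (lset G mul s (Pbar G e P)))) R)
  (HmuPb : is_product_measure G n M R nu (lset G mul s (Pbar G e P)) muPb)
  (muP : probability (g_sigma_algebraType (cylinders G n M (lset G mul s P))) R)
  (HmuP : is_product_measure G n M R nu (lset G mul s P) muP) :
  (muPb (restr G n M (lset G mul s (Pbar G e P)) @`
           (phi G n M @` Zd G mul inv e n M g N d j s k))
   <= ((M k)%:R^-1)%:E *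
      \int[muP]_x (u_fun G mul inv e n M R g N d j s k P x)%:E)%E.
Proof.
have Hj1 : (0 < j)%N by case/andP: Hj.
set E := lset G mul s P.
set E' := lset G mul s (Pbar G e P).
pose hE := hEE' G mul e P s.
pose ZdP (P0 : Sf n M -> Prop) := [set yc | Zd G mul inv e n M g N d j s k yc /\ P0 (yc.1 s)].
pose T (i : nat) : set (CT G n M E) := restr G n M E @` (phi G n M @` ZdP (fun a => nat_of_ord (a k) = i)).
have mT i : measurable (T i) := Zd_img_meas G mul inv e HG n M g Hgfin N d j Hj1 s k E _.
have uE x : u_fun G mul inv e n M R g N d j s k P x = \sum_(i < M k) \1_(T i) x.
  rewrite /u_fun; apply: eq_bigr => i _; congr (\1_ _ x).
  rewrite /T; congr (_ @` (_ @` _)); apply/seteqP; split => yc.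
    by move=> [B _ [[hZ _] hi]]; split.
  move=> [hZ hi].
  exists [set am : G * 'I_n | Aset G n g k am /\ yc.2 (mul s am.1) am.2 = sgnb d * sgz (g k am.2 am.1) * j%:Z].
    by move=> am [].
  split => //; split => //; split => [am []//|am hA hB]; apply/eqP => h; apply: hB; by split.
have intE : (\int[muP]_x (u_fun G mul inv e n M R g N d j s k P x)%:E =
             \sum_(i < M k) muP (T i))%E.
  under eq_integral do rewrite uE -sumEFin.
  rewrite ge0_integral_sum //.
  - by apply: eq_bigr => i _; rewrite integral_indic // setIT.
  - by move=> i; apply/measurable_EFinP; exact: measurable_indic.
pose sc : coord G E' := exist _ s (sE' G mul inv e HG P s).
pose piece (a : Sf n M) : set (CT G n M E') := @Xa G n M E' s a `&` rs hE @^-1` T (a k).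
have mpiece a : measurable (piece a) := rs_pre_meas hE s a (T (a k)) (mT _).
set S := restr G n M E' @` _.
have mS : @measurable _ (CT G n M E') S.
  have := Zd_img_meas G mul inv e HG n M g Hgfin N d j Hj1 s k E' (fun _ => True).
  congr (measurable (_ @` (_ @` _))); apply/seteqP; split => yc //; by case.
pose S' := \big[setU/set0]_(a : Sf n M) piece a.
have mS' : measurable S' by apply: bigsetU_measurable => a _; exact: mpiece.
have SS' : S `<=` S'.
  move=> _ [_ [yc hZ <-] <-]; rewrite /S' (bigD1 (yc.1 s)) //=; left; split.
    by move=> [t Et] /=; rewrite mem_seq1 => /eqP ht; rewrite /restr /phi /= ht.
  by exists yc.1 => //; exists yc.
apply: (le_trans (le_measure _ (mem_set mS) (mem_set mS') SS')).
have reidx (X : Type) (idx : X) (op : Monoid.com_law idx) (F : Sf n M -> X) :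
    \big[op/idx]_(a : Sf n M) F a =
    \big[op/idx]_(i < #|(xpredT : pred (Sf n M))|) F (enum_val i).
  by rewrite -big_enum_val; apply: eq_bigl.
rewrite /S' reidx measure_bigsetU_ord //; last first.
  apply/trivIsetP => i i' _ _ ii'; apply/seteqP; split => // x [[h1 _] [h2 _]].
  have e1 := h1 sc; have e2 := h2 sc; rewrite /= mem_seq1 eqxx in e1 e2.
  by move: ii'; rewrite (enum_val_inj (etrans (esym (e1 isT)) (e2 isT))) eqxx.
rewrite -(reidx _ _ _ (fun a => muPb (piece a))).
have pm a : muPb (piece a) = ((nu a)%:E * muP (T (a k)))%E.
  exact: (prod_meas G mul inv e HG n M P HPe s R nu Hnu0 muPb HmuPb muP HmuP a (T (a k)) (mT _)).
under eq_bigr => a _ do rewrite pm.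
rewrite (partition_big (fun a : Sf n M => a k) xpredT) //=.
under eq_bigr => c _.
  under eq_bigr => a /eqP -> do [].
  rewrite -ge0_sume_distrl; last by move=> a _; rewrite lee_fin.
  rewrite sumEFin Hmarg.
  over.
rewrite -ge0_sume_distrr; last by move=> c _; exact: measure_ge0.
by rewrite intE (prednK (HMpos k)).
Qed.
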